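(* Let a sequence $b_1,b_2,\dots$ be encoded by a causal linear time-invariant code that is $(R,\beta)$-anytime reliable (with $d_o=0$) over the packet erasure channel, and decoded by the erasure decoder, as described in the context. Let $1\le\tau_1'\le\tau_1<\tau_2'\le\tau_2$ be integers (so the intervals $[\tau_1',\tau_1]$ and $[\tau_2',\tau_2]$ are disjoint). Then $$P\big(Y(\tau_1',\tau_1)\cap Y(\tau_2',\tau_2)\big)\le 2^{-\beta\left((\tau_1-\tau_1'+1)+(\tau_2-\tau_2'+1)\right)},$$ where the probability is over the channel erasures only.
   Context: Packets are elements of $\mathbb F_2^{\Lambda}$. A causal linear time-invariant code maps information blocks $b_t\in\mathbb F_2^{a}$ ($t\ge1$) to channel blocks $c_t=G_1b_t+G_2b_{t-1}+\dots+G_tb_1\in\mathbb F_2^{n\Lambda}$, consisting of $n$ packets, with fixed matrices $G_i$ over $\mathbb F_2$. Each transmitted packet is independently erased with probability $p$ and otherwise received correctly. At each time $t$ the decoder, using all unerased packets received up to time $t$, produces estimates $\hat b_{\tau|t}$, $1\le\tau\le t$: $\hat b_{\tau|t}=b_\tau$ if $b_\tau$ is uniquely determined by the received packets (i.e. it takes the same value in every input sequence consistent with them), and otherwise $\hat b_{\tau|t}$ is declared an erasure (counted as $\hat b_{\tau|t}\neq b_\tau$). The code is $(R,\beta)$-anytime reliable (with $d_o=0$) if for every input sequence and all $1\le\tau\le t$, $P(\hat b_{\tau|t}\ne b_\tau)\le 2^{-\beta(t-\tau+1)}$. For $1\le\tau'\le\tau$, $Y(\tau',\tau)$ denotes the event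 that at decoding time $\tau$ the earliest decoding error is at position $\tau'$: $\hat b_{\ell|\tau}=b_\ell$ for all $\ell<\tau'$ and $\hat b_{\tau'|\tau}\ne b_{\tau'}$. *)

(* Defs.v *)
From mathcomp Require Import all_boot all_algebra.
From Stdlib Require Import Reals.

Set Implicit Arguments.
Unset Strict Implicit.
Unset Printing Implicit Defensive.

(* Code: a causal LTI code with packets in F_2^Lambda, n packets per
   channel block, information blocks in F_2^a.  G i j : 'M_(Lambda,a) is
   the block of rows of G_i producing packet j (j < n); so
   G_i = (G i 0; ...; G i (n-1)) stacked, an (n*Lambda) x a matrix.
   Times are 1,2,3,...; G 0 is unused.                                  *)
Local Open Scope ring_scope.
Definition code (n Lam a : nat) := nat -> 'I_n -> 'M['F_2]_(Lam, a).

(* Information sequence b_1, b_2, ... (b 0 unused). *)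
Definition inseq (a : nat) := nat -> 'cV['F_2]_a.

Definition chan n Lam a (G : code n Lam a) (b : inseq a) (t : nat) (j : 'I_n)
  : 'cV['F_2]_Lam :=
  \sum_(1 <= s < t.+1) mulmx (G (t - s).+1 j) (b s).

(* Erasure pattern: e t j = true iff packet j of block t is erased. *)
Definition epat (n : nat) := nat -> 'I_n -> bool.

Local Close Scope ring_scope.
(* the input sequence b_1..b_t given by a finite table B (B i = b'_{i+1}),
   extended by 0 outside 1..t *)
Definition seqof a t (B : {ffun 'I_t -> 'cV['F_2]_a}) : inseq a :=
  fun s => if (0 < s)%N then
             (match (insub s.-1 : option 'I_t) with
              | Some i => B i
              | None => GRing.zero
              end)
           else GRing.zero.

Definition consistent n Lam a (G : code n Lam a) (e : epat n) (b : inseq a)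
  t (B : {ffun 'I_t -> 'cV['F_2]_a}) : bool :=
  [forall s : 'I_t, forall j : 'I_n,
     ~~ e s.+1 j ==> (chan G (seqof B) s.+1 j == chan G b s.+1 j)].

(* hat b_{tau|t} = b_tau : b_tau is uniquely determined by the packets
   received up to time t (same value in every consistent input). Inputs
   at times > t do not affect packets up to time t, so it suffices to
   range over b'_1..b'_t. *)
Definition dec_ok n Lam a (G : code n Lam a) (e : epat n) (b : inseq a)
  (tau t : nat) : bool :=
  [forall B : {ffun 'I_t -> 'cV['F_2]_a},
     consistent G e b B ==> (seqof B tau == b tau)].

Definition Yev n Lam a (G : code n Lam a) (b : inseq a) (tau' tau : nat)
  (e : epat n) : bool :=
  [forall l : 'I_tau', (0 < (l : nat)) ==> dec_ok G e b l tau]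
  && ~~ dec_ok G e b tau' tau.

(* Probability over i.i.d. erasures (prob. p) of the packets of blocks
   1..T, of an event ev on erasure patterns (ev is only applied to events
   depending on blocks <= T; packets after T are set to "received"). *)
Definition ext n T (E : {ffun 'I_T * 'I_n -> bool}) : epat n :=
  fun t j => match (insub t.-1 : option 'I_T) with
             | Some i => (0 < t)%N && E (i, j)
             | None => false
             end.

Definition pweight (p : R) n T (E : {ffun 'I_T * 'I_n -> bool}) : R :=
  \big[Rmult/R1]_(x : 'I_T * 'I_n) (if E x then p else Rminus R1 p).

Definition prob (p : R) n T (ev : epat n -> bool) : R :=
  \big[Rplus/R0]_(E : {ffun 'I_T * 'I_n -> bool})
     Rmult (pweight p E) (if ev (ext E) then R1 else R0).

(* (R, beta)-anytime reliability with d_o = 0, for every input sequence *)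
Definition anytime_reliable (p beta : R) n Lam a (G : code n Lam a) : Prop :=
  forall (b : inseq a) (tau t : nat), (1 <= tau)%N -> (tau <= t)%N ->
    Rle (prob p t (fun e => ~~ dec_ok G e b tau t))
        (Rpower (INR 2) (Ropp (Rmult beta (INR (t - tau + 1))))).

(* Main.v *)
Require Import Defs.
From mathcomp Require Import all_boot all_algebra.
From Stdlib Require Import Reals.

From HB Require Import structures.
From mathcomp Require Import zify.
From Stdlib Require Import Lra.
Set Implicit Arguments. Unset Strict Implicit. Unset Printing Implicit Defensive.
Import GRing.Theory.

Lemma Rplus_0_l' : left_id R0 Rplus. Proof. move=> x; exact: Rplus_0_l. Qed.
Lemma Rmult_1_l' : left_id R1 Rmult. Proof. move=> x; exact: Rmult_1_l. Qed.
Lemma Rplus_assoc' : associative Rplus. Proof. move=> x y z; by rewrite Rplus_assoc. Qed.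
Lemma Rmult_assoc' : associative Rmult. Proof. move=> x y z; by rewrite Rmult_assoc. Qed.
HB.instance Definition _ := Monoid.isComLaw.Build R R0 Rplus Rplus_assoc' Rplus_comm Rplus_0_l'.
HB.instance Definition _ := Monoid.isComLaw.Build R R1 Rmult Rmult_assoc' Rmult_comm Rmult_1_l'.
Lemma Rmult_0_l' : left_zero R0 Rmult. Proof. move=> x; exact: Rmult_0_l. Qed.
Lemma Rmult_0_r' : right_zero R0 Rmult. Proof. move=> x; exact: Rmult_0_r. Qed.
HB.instance Definition _ := Monoid.isMulLaw.Build R R0 Rmult Rmult_0_l' Rmult_0_r'.
Lemma RDl : left_distributive Rmult Rplus. Proof. move=> x y z; exact: Rmult_plus_distr_r. Qed.
Lemma RDr : right_distributive Rmult Rplus. Proof. move=> x y z; exact: Rmult_plus_distr_l. Qed.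
HB.instance Definition _ := Monoid.isAddLaw.Build R Rmult Rplus RDl RDr.

Section Fiber.
Variables (X Y1 Y2 : finType) (h1 : Y1 -> X) (h2 : Y2 -> X).
Hypotheses (inj1 : injective h1) (inj2 : injective h2)
  (disj : forall y1 y2, h1 y1 != h2 y2).
Variable w : bool -> R.
Hypothesis wsum : Rplus (w true) (w false) = R1.

Definition r1 (E : {ffun X -> bool}) : {ffun Y1 -> bool} := [ffun y => E (h1 y)].
Definition r2 (E : {ffun X -> bool}) : {ffun Y2 -> bool} := [ffun y => E (h2 y)].

Lemma fiber E1 E2 :
  \big[Rplus/R0]_(E : {ffun X -> bool} | (r1 E == E1) && (r2 E == E2))
      \big[Rmult/R1]_x w (E x)
  = Rmult (\big[Rmult/R1]_y w (E1 y)) (\big[Rmult/R1]_y w (E2 y)).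
Proof.
pose Q := fun (x : X) (j : bool) =>
  [forall y, (h1 y == x) ==> (j == E1 y)] && [forall y, (h2 y == x) ==> (j == E2 y)].
rewrite (eq_bigl (fun E => E \in finfun.family Q)); last first.
  move=> E; apply/andP/familyP => [[/eqP e1 /eqP e2] x | HQ].
    rewrite /Q -e1 -e2; apply/andP; split; apply/forallP => y; apply/implyP => /eqP <-;
    by rewrite ffunE.
  split; apply/eqP/ffunP => y; rewrite ffunE.
    have /andP[/forallP H1 _] := HQ (h1 y).
    by apply/eqP; move: (H1 y); rewrite eqxx.
  have /andP[_ /forallP H3] := HQ (h2 y); by apply/eqP; move: (H3 y); rewrite eqxx.
rewrite -(@bigA_distr_big_dep _ _ _ _ _ X bool Q (fun _ j => w j)).
rewrite (bigID (mem (h1 @: setT))) /=.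
rewrite [X in Rmult _ X](bigID (mem (h2 @: setT))) /=.
rewrite [X in Rmult _ (Rmult X _)](eq_bigl (mem (h2 @: setT))); last first.
  move=> x; rewrite /= andbC; case: (boolP (x \in h2 @: setT)) => //= /imsetP [y2 _ ->].
  apply/negP => /imsetP [y1 _ h]; move: (disj y1 y2); by rewrite h eqxx.
rewrite (big_imset _ (in2W inj1)) (big_imset _ (in2W inj2)) /=.
rewrite [X in Rmult _ (Rmult _ X)]big1; last first.
  move=> x /andP [n1 n2]; rewrite -wsum -big_bool; apply: eq_bigl => j.
  rewrite /Q; apply/andP; split; apply/forallP => y; apply/implyP => /eqP hx.
    by move: n1; rewrite -hx imset_f ?inE.
  by move: n2; rewrite -hx imset_f ?inE.
rewrite Rmult_1_r; congr Rmult.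
  apply: eq_big => y; first by rewrite inE.
  move=> _; rewrite (eq_bigl (fun j => j == E1 y)) ?big_pred1_eq //.
  move=> j; rewrite /Q; apply/andP/eqP => [[/forallP /(_ y)] | ->].
    by rewrite eqxx /= => /eqP.
  split; apply/forallP => y'; apply/implyP => /eqP hy.
    by rewrite (inj1 hy).
  by move: (disj y y'); rewrite hy eqxx.
apply: eq_big => y; first by rewrite inE.
move=> _; rewrite (eq_bigl (fun j => j == E2 y)) ?big_pred1_eq //.
move=> j; rewrite /Q; apply/andP/eqP => [[_ /forallP /(_ y)] | ->].
  by rewrite eqxx /= => /eqP.
split; apply/forallP => y'; apply/implyP => /eqP hy.
  by move: (disj y' y); rewrite hy eqxx.
by rewrite (inj2 hy).
Qed.

Lemma decomp (F1 : {ffun Y1 -> bool} -> R) (F2 : {ffun Y2 -> bool} -> R) :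
  \big[Rplus/R0]_(E : {ffun X -> bool})
     Rmult (\big[Rmult/R1]_x w (E x)) (Rmult (F1 (r1 E)) (F2 (r2 E)))
  = Rmult (\big[Rplus/R0]_(E1 : {ffun Y1 -> bool}) Rmult (\big[Rmult/R1]_y w (E1 y)) (F1 E1))
          (\big[Rplus/R0]_(E2 : {ffun Y2 -> bool}) Rmult (\big[Rmult/R1]_y w (E2 y)) (F2 E2)).
Proof.
rewrite big_distrlr /= pair_big /=.
rewrite (partition_big (fun E => (r1 E, r2 E)) xpredT) //=.
apply: eq_bigr => [[E1 E2]] _ /=.
transitivity (\big[Rplus/R0]_(E | (r1 E, r2 E) == (E1, E2)) Rmult (\big[Rmult/R1]_x w (E x)) (Rmult (F1 E1) (F2 E2))).
  by apply: eq_bigr => E /eqP [-> ->].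
rewrite -big_distrl /=.
rewrite (eq_bigl (fun E => (r1 E == E1) && (r2 E == E2))); last first.
  by move=> E; rewrite xpair_eqE.
rewrite fiber.
rewrite -!Rmult_assoc; congr Rmult; rewrite !Rmult_assoc; congr Rmult; apply: Rmult_comm.
Qed.
End Fiber.

Lemma ext_S n T (E : {ffun 'I_T * 'I_n -> bool}) s (hs : (s < T)%nat) j :
  ext E s.+1 j = E (Ordinal hs, j).
Proof.
rewrite /ext /=; case: insubP => [i _ hi | ]; last by rewrite hs.
by congr (E (_, j)); apply: val_inj; rewrite /= hi.
Qed.

Lemma dec_ok_ext n Lam a (G : code n Lam a) e e' b tau t :
  (forall (s : 'I_t) j, e s.+1 j = e' s.+1 j) ->
  dec_ok G e b tau t = dec_ok G e' b tau t.
Proof.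
move=> H; apply: eq_forallb => B; congr (_ ==> _).
by apply: eq_forallb => s; apply: eq_forallb => j; rewrite H.
Qed.

Lemma seqof_in a t (B : {ffun 'I_t -> 'cV['F_2]_a}) u (hu : (0 < u)%nat)
  (ht : (u.-1 < t)%nat) : seqof B u = B (Ordinal ht).
Proof.
rewrite /seqof hu; case: insubP => [i _ hi | ]; last by rewrite ht.
by congr (B _); apply: val_inj; rewrite /= hi.
Qed.

Local Open Scope ring_scope.

Lemma chan0 n Lam a (G : code n Lam a) t j : chan G (fun _ => 0) t j = 0.
Proof. by rewrite /chan big1 // => s _; rewrite mulmx0. Qed.

Lemma chan_shift n Lam a (G : code n Lam a) (d t : nat) (j : 'I_n) (x y Dq : inseq a) :
  (forall l : nat, (0 < l)%nat && (l <= d)%nat -> x l = y l) ->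
  (forall u : nat, (0 < u)%nat && (u <= t)%nat -> Dq u = x (u + d)%nat - y (u + d)%nat) ->
  chan G Dq t j = chan G x (t + d) j - chan G y (t + d) j.
Proof.
move=> Hxy HD; rewrite /chan -sumrB; symmetry.
rewrite (eq_bigr (fun v => G (t + d - v)%nat.+1 j *m (x v - y v))); last first.
  by move=> v _; rewrite mulmxBr.
rewrite (@big_cat_nat _ _ _ d.+1) //=; last by lia.
rewrite big_nat_cond big1 ?add0r; last first.
  by move=> v /andP[/andP[h1 h2] _]; rewrite Hxy ?subrr ?mulmx0 //; lia.
rewrite -(add1n d) big_addn.
have -> : ((t + d).+1 - d = t.+1)%nat by lia.
apply: eq_big_nat => u /andP[hu1 hu2]; rewrite HD; last by lia.

by have -> : (t + d - (u + d) = t - u)%nat by lia.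
Qed.

Lemma shord_proof (T d : nat) (i : 'I_(T - d)) : (i + d < T)%nat.
Proof. have := ltn_ord i; lia. Qed.
Definition shord (T d : nat) (i : 'I_(T - d)) : 'I_T := Ordinal (shord_proof i).

Definition r_ (X Y : finType) (h : Y -> X) (E : {ffun X -> bool}) : {ffun Y -> bool} :=
  [ffun y => E (h y)].

Section Dec.
Variables (n Lam a : nat) (G : code n Lam a) (b : inseq a).

Lemma Y1_imp (tau1' tau1 tau2 : nat) (le12 : (tau1 <= tau2)%nat)
  (E : {ffun 'I_tau2 * 'I_n -> bool}) :
  Yev G b tau1' tau1 (ext E) ->
  ~~ dec_ok G (ext (r_ (fun p : 'I_tau1 * 'I_n => (widen_ord le12 p.1, p.2)) E))
       b tau1' tau1.
Proof.
move=> /andP[_]; rewrite (@dec_ok_ext _ _ _ _ _ (ext (r_ (fun p : 'I_tau1 * 'I_n => (widen_ord le12 p.1, p.2)) E))) //.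
move=> s j; rewrite (ext_S _ (leq_trans (ltn_ord s) le12)) (ext_S _ (ltn_ord s)) /r_ ffunE /=.
by congr (E (_, j)); apply: val_inj.
Qed.

Lemma Y2_imp (tau2' tau2 : nat) (h1 : (1 <= tau2')%nat) (h2 : (tau2' <= tau2)%nat)
  (E : {ffun 'I_tau2 * 'I_n -> bool}) :
  Yev G b tau2' tau2 (ext E) ->
  ~~ dec_ok G (ext (r_ (fun p : 'I_(tau2 - tau2'.-1) * 'I_n => (shord p.1, p.2)) E))
       (fun _ => 0) 1 (tau2 - tau2'.-1).
Proof.
set d := tau2'.-1; set T2 := (tau2 - d)%nat.
move=> /andP[/forallP Hl /forallPn [B]]; rewrite negb_imply => /andP[cB nB].
have HB : forall l : nat, (0 < l)%nat && (l <= d)%nat -> seqof B l = b l.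
  move=> l /andP[l0 ld]; have lt : (l < tau2')%nat by rewrite /d in ld; lia.
  move: (Hl (Ordinal lt)) => /=; rewrite l0 /= => /forallP /(_ B).
  by rewrite cB /= => /eqP.
pose D : {ffun 'I_T2 -> 'cV['F_2]_a} := [ffun i : 'I_T2 => seqof B (i + tau2')%nat - b (i + tau2')%nat].
apply/forallPn; exists D; rewrite negb_imply; apply/andP; split.
  apply/forallP => s; apply/forallP => j; apply/implyP => he.
  rewrite chan0 (@chan_shift _ _ _ _ d _ _ (seqof B) b _ HB); last first.
    move=> u /andP[u0 ut].
    have hu : (u.-1 < T2)%nat by have := ltn_ord s; lia.
    rewrite (seqof_in _ u0 hu) /D ffunE /=.
    by have -> : (u.-1 + tau2' = u + d)%nat by rewrite /d; lia.
  have hs : (s + d < tau2)%nat by exact: shord_proof.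
  move/forallP: cB => /(_ (Ordinal hs)) /forallP /(_ j) /implyP.
  rewrite (ext_S _ hs) /= addSn => H.
  rewrite subr_eq0; apply: H.
  move: he; rewrite (ext_S _ (ltn_ord s)) /r_ ffunE /=.
  by congr (~~ E (_, j)); apply: val_inj.
have h0 : (0 < T2)%nat by rewrite /T2 /d; lia.
rewrite (seqof_in _ (isT : (0 < 1)%nat) h0) /D ffunE /= add0n subr_eq0.
exact: nB.
Qed.
End Dec.
Local Close Scope ring_scope.

Lemma pweight_ge0 (p : R) n T (E : {ffun 'I_T * 'I_n -> bool}) :
  Rle R0 p -> Rle p R1 -> Rle R0 (pweight p E).
Proof.
move=> hp0 hp1; rewrite /pweight; apply: (big_ind (fun x => Rle R0 x)).
- lra.
- move=> x y hx hy; exact: Rmult_le_pos.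
- move=> i _; case: (E i) => /=; lra.
Qed.

Lemma prob_ge0 (p : R) n T (ev : epat n -> bool) :
  Rle R0 p -> Rle p R1 -> Rle R0 (prob p T ev).
Proof.
move=> hp0 hp1; rewrite /prob; apply: (big_ind (fun x => Rle R0 x)).
- lra.
- move=> x y hx hy; exact: Rplus_le_le_0_compat.
- move=> E _; apply: Rmult_le_pos; first exact: pweight_ge0.
  case: (ev _); lra.
Qed.

Theorem lemma6 (p beta : R) (n Lam a : nat) (G : code n Lam a)
  (hp0 : Rle R0 p) (hp1 : Rle p R1)
  (hrel : anytime_reliable p beta G)
  (b : inseq a) (tau1' tau1 tau2' tau2 : nat)
  (h1 : (1 <= tau1')%N) (h2 : (tau1' <= tau1)%N) (h3 : (tau1 < tau2')%N)
  (h4 : (tau2' <= tau2)%N) :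
  Rle (prob p tau2 (fun e => Yev G b tau1' tau1 e && Yev G b tau2' tau2 e))
      (Rpower (INR 2)
         (Ropp (Rmult beta (INR ((tau1 - tau1' + 1) + (tau2 - tau2' + 1)))))).
Proof.
have le12 : (tau1 <= tau2)%nat by lia.
set T2 := (tau2 - tau2'.-1)%nat.
pose h1f := fun p : 'I_tau1 * 'I_n => (widen_ord le12 p.1, p.2).
pose h2f := fun p : 'I_T2 * 'I_n => (@shord tau2 tau2'.-1 p.1, p.2).
have inj1 : injective h1f.
  move=> [i j] [i' j'] [hi ->]; congr pair; apply: val_inj; exact: hi.
have inj2 : injective h2f.
  move=> [i j] [i' j'] [hi ->]; congr pair; apply: val_inj.
  by move: hi => /= /addIn.
have disj : forall y1 y2, h1f y1 != h2f y2.
  move=> [i j] [i' j']; apply/negP => /eqP [hi _].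
  move: hi => /=; have := ltn_ord i; lia.
pose w := fun v : bool => if v then p else Rminus R1 p.
have wsum : Rplus (w true) (w false) = R1 by rewrite /w; lra.
pose b0 : inseq a := fun _ => GRing.zero.
pose F1 := fun E1 : {ffun 'I_tau1 * 'I_n -> bool} =>
  if ~~ dec_ok G (ext E1) b tau1' tau1 then R1 else R0.
pose F2 := fun E2 : {ffun 'I_T2 * 'I_n -> bool} =>
  if ~~ dec_ok G (ext E2) b0 1 T2 then R1 else R0.
apply Rle_trans with
  (Rmult (prob p tau1 (fun e => ~~ dec_ok G e b tau1' tau1))
         (prob p T2 (fun e => ~~ dec_ok G e b0 1 T2))).
  apply Rle_trans with (\big[Rplus/R0]_(E : {ffun 'I_tau2 * 'I_n -> bool})
      Rmult (pweight p E) (Rmult (F1 (r_ h1f E)) (F2 (r_ h2f E)))).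
    rewrite /prob; apply: (big_ind2 (fun x y => Rle x y)).
    - lra.
    - move=> x1 x2 y1 y2 hx hy; exact: Rplus_le_compat.
    - move=> E _; apply: Rmult_le_compat_l; first exact: pweight_ge0.
      case: (boolP (Yev G b tau1' tau1 (ext E) && Yev G b tau2' tau2 (ext E))).
        move=> /andP[y1 y2].
        have h1' : (1 <= tau2')%nat by lia.
        rewrite /F1 /F2 (Y1_imp le12 y1) (Y2_imp h1' h4 y2) /=; lra.
      move=> _; rewrite /F1 /F2; case: (~~ dec_ok _ _ _ _ _); case: (~~ dec_ok _ _ _ _ _); lra.
  right; exact: (decomp inj1 inj2 disj wsum F1 F2).
have e2 : (T2 - 1 + 1 = tau2 - tau2' + 1)%nat by rewrite /T2; lia.
have B1 := hrel b tau1' tau1 h1 h2.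
have B2 := hrel b0 1 T2 (isT : (1 <= 1)%nat) ltac:(rewrite /T2; lia).
rewrite e2 in B2.
rewrite plus_INR.
replace (Ropp (Rmult beta (Rplus (INR (tau1 - tau1' + 1)) (INR (tau2 - tau2' + 1)))))
  with (Rplus (Ropp (Rmult beta (INR (tau1 - tau1' + 1))))
              (Ropp (Rmult beta (INR (tau2 - tau2' + 1))))) by ring.
rewrite Rpower_plus.
apply: Rmult_le_compat => //; exact: prob_ge0.
Qed.
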